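(* Let $C\neq\mathbb{F}_q^n$ be a $q$-ary linear code with minimum distance $d=1$ and covering radius $\rho$. Then $C$ can be obtained, up to a permutation of coordinates, by applying the $q$-repeated code construction some number of times to a linear code $D$ which has minimum distance greater than one and covering radius $\rho$. Moreover, $C$ is completely regular if and only if $D$ is completely regular.
   Context: The $q$-repeated code of $D\subseteq\mathbb{F}_q^m$ is $\{(a,x_1,\dots,x_m): a\in\mathbb{F}_q,(x_1,\dots,x_m)\in D\}\subseteq\mathbb{F}_q^{m+1}$. Covering radius $\rho=\max_{\bf v}\min_{{\bf x}\in C}d({\bf v},{\bf x})$ (Hamming distance). A code is completely regular if for every vector ${\bf x}$, with $t=d({\bf x},C)$, the number of codewords at distance $i$ from ${\bf x}$ depends only on $t$ and $i$. *)

(* Defs.v *)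
(* Codes over a finite field F (= F_q, q = #|F|). *)
From mathcomp Require Import all_boot all_order all_algebra all_fingroup.
Set Implicit Arguments. Unset Strict Implicit. Unset Printing Implicit Defensive.
Import GRing.Theory.
Local Open Scope ring_scope.

Section Codes.
Variable F : finFieldType.

Definition hdist (n : nat) (x y : 'rV[F]_n) : nat :=
  #|[set i : 'I_n | x 0 i != y 0 i]|.

Definition is_linear_code (n : nat) (C : {set 'rV[F]_n}) : bool :=
  (0 \in C) && [forall x in C, forall y in C, forall a : F, a *: x + y \in C].

Definition has_min_dist (n : nat) (C : {set 'rV[F]_n}) (d : nat) : Prop :=
  (exists x, exists y, [/\ x \in C, y \in C, x != y & hdist x y = d]) /\
  (forall x y, x \in C -> y \in C -> x != y -> (d <= hdist x y)%N).

(* Minimum distance greater than one (vacuous for the zero code,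
   whose minimum distance is conventionally infinite). *)
Definition min_dist_gt1 (n : nat) (C : {set 'rV[F]_n}) : Prop :=
  forall x y, x \in C -> y \in C -> x != y -> (1 < hdist x y)%N.

Definition dist_to_code (n : nat) (v : 'rV[F]_n) (C : {set 'rV[F]_n}) : nat :=
  \big[minn/n]_(x in C) hdist v x.

Definition cov_rad (n : nat) (C : {set 'rV[F]_n}) : nat :=
  \max_(v : 'rV[F]_n) dist_to_code v C.

Definition completely_regular (n : nat) (C : {set 'rV[F]_n}) : Prop :=
  forall x y : 'rV[F]_n, dist_to_code x C = dist_to_code y C ->
    forall i : nat,
      #|[set c in C | hdist x c == i]| = #|[set c in C | hdist y c == i]|.

Definition rep_code (m : nat) (D : {set 'rV[F]_m}) : {set 'rV[F]_(1 + m)} :=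
  [set row_mx a x | a in [set: 'rV[F]_1], x in D].

Fixpoint rep_iter (m k : nat) (D : {set 'rV[F]_m}) : {set 'rV[F]_(k + m)} :=
  match k return {set 'rV[F]_(k + m)} with
  | 0 => D
  | k'.+1 => rep_code (rep_iter k' D)
  end.

End Codes.

(* Main.v *)
Require Import Defs.
From mathcomp Require Import all_boot all_order all_algebra all_fingroup.
From mathcomp Require Import zify.
Set Implicit Arguments. Unset Strict Implicit. Unset Printing Implicit Defensive.
Import GRing.Theory.
Local Open Scope ring_scope.

Section Aux.
Variable F : finFieldType.

Lemma hdist_sum n (x y : 'rV[F]_n) : hdist x y = (\sum_i ((x 0%R i != y 0%R i) : nat))%N.
Proof.
rewrite /hdist -sum1_card big_mkcond /=; apply: eq_bigr => i _.
by rewrite inE; case: (_ != _).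
Qed.

Lemma hdist_le n (x y : 'rV[F]_n) : (hdist x y <= n)%N.
Proof. by rewrite /hdist -[X in (_ <= X)%N]card_ord max_card. Qed.

Lemma hdist_row_mx m (a b : 'rV[F]_1) (x y : 'rV[F]_m) :
  hdist (row_mx a x) (row_mx b y) = (hdist a b + hdist x y)%N.
Proof.
rewrite !hdist_sum big_split_ord /=; congr (_ + _)%N; apply: eq_bigr => i _;
by rewrite ?row_mxEl ?row_mxEr.
Qed.

Lemma hdist_transl n (x y z : 'rV[F]_n) : hdist (x + z) (y + z) = hdist x y.
Proof.
rewrite !hdist_sum; apply: eq_bigr => i _; by rewrite !mxE (inj_eq (addIr _)).
Qed.

Lemma hdist1 (a b : 'rV[F]_1) : hdist a b = (a 0 0 != b 0 0).
Proof. by rewrite hdist_sum big_ord1. Qed.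

Lemma seqmin_le (T : eqType) (s : seq T) (f : T -> nat) (n : nat) c :
  c \in s -> (\big[minn/n]_(x <- s) f x <= f c)%N.
Proof.
elim: s => [|x s IH] //; rewrite in_cons big_cons => /orP [/eqP->|Hc].
  exact: geq_minl.
exact: leq_trans (geq_minr _ _) (IH Hc).
Qed.

Lemma seqmin_att (T : eqType) (s : seq T) (f : T -> nat) (n : nat) :
  (forall x, x \in s -> f x <= n)%N -> s != [::] ->
  exists2 c, c \in s & \big[minn/n]_(x <- s) f x = f c.
Proof.
elim: s => [|x s IH] // Hf _; rewrite big_cons.
case: s IH Hf => [|y s] IH Hf.
  exists x; first by rewrite mem_head.
  by rewrite big_nil; apply/minn_idPl; apply: Hf; rewrite mem_head.
have Hf' : forall z, z \in y :: s -> (f z <= n)%N.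
  by move=> z Hz; apply: Hf; rewrite in_cons Hz orbT.
have [c Hc ->] := IH Hf' isT.
case: (leqP (f x) (f c)) => H.
  by exists x; rewrite ?mem_head.
by exists c; rewrite // in_cons Hc orbT.
Qed.

Lemma dist_le n (v : 'rV[F]_n) (C : {set 'rV[F]_n}) c :
  c \in C -> (dist_to_code v C <= hdist v c)%N.
Proof. by move=> Hc; rewrite /dist_to_code -big_filter seqmin_le // mem_filter Hc mem_index_enum. Qed.

Lemma dist_att n (v : 'rV[F]_n) (C : {set 'rV[F]_n}) c0 :
  c0 \in C -> exists2 c, c \in C & dist_to_code v C = hdist v c.
Proof.
move=> Hc0; rewrite /dist_to_code -big_filter.
set s := filter _ _.
have Hs : s != [::].
  have : c0 \in s by rewrite mem_filter Hc0 mem_index_enum.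
  by case: (s).
have [c Hc ->] := @seqmin_att _ s (fun x => hdist v x) n (fun x _ => hdist_le v x) Hs.
by exists c; move: Hc; rewrite // mem_filter => /andP[].
Qed.

Lemma dist_uniq n (v : 'rV[F]_n) (C : {set 'rV[F]_n}) c0 d :
  c0 \in C -> (forall c, c \in C -> d <= hdist v c)%N ->
  (exists2 c, c \in C & hdist v c = d) -> dist_to_code v C = d.
Proof.
move=> Hc0 Hlow [c Hc Hcd]; have [c' Hc' E] := dist_att v Hc0.
have := dist_le v Hc; rewrite E => H.
by apply/eqP; rewrite eqn_leq Hlow // andbT -Hcd.
Qed.

Lemma hdistxx n (x : 'rV[F]_n) : hdist x x = 0%N.
Proof. by rewrite hdist_sum big1 // => i _; rewrite eqxx. Qed.

Lemma mem_rep m (X : {set 'rV[F]_m}) z : (z \in rep_code X) = (rsubmx z \in X).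
Proof.
apply/imset2P/idP => [[a x _ Hx ->]|Hz]; first by rewrite row_mxKr.
by exists (lsubmx z) (rsubmx z); rewrite ?inE ?hsubmxK.
Qed.

Lemma rep_mem m (X : {set 'rV[F]_m}) a x : (row_mx a x \in rep_code X) = (x \in X).
Proof. by rewrite mem_rep row_mxKr. Qed.

Lemma dist_rep m (X : {set 'rV[F]_m}) c0 a v : c0 \in X ->
  dist_to_code (row_mx a v) (rep_code X) = dist_to_code v X.
Proof.
move=> Hc0; apply: (dist_uniq (c0 := row_mx 0 c0)); first by rewrite rep_mem.
  move=> z; rewrite mem_rep => Hz; rewrite -(hsubmxK z) hdist_row_mx.
  exact: leq_trans (dist_le v Hz) (leq_addl _ _).
have [c Hc E] := dist_att v Hc0.
by exists (row_mx a c); rewrite ?rep_mem // hdist_row_mx hdistxx E.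
Qed.

Lemma cov_rep m (X : {set 'rV[F]_m}) c0 : c0 \in X ->
  cov_rad (rep_code X) = cov_rad X.
Proof.
move=> Hc0; apply/eqP; rewrite eqn_leq; apply/andP; split.
  apply/bigmax_leqP => w _; rewrite -(hsubmxK w) (dist_rep _ _ Hc0).
  exact: leq_bigmax.
apply/bigmax_leqP => v _; rewrite -(dist_rep 0 v Hc0).
exact: leq_bigmax.
Qed.

Lemma card_setE (T : finType) (P : pred T) : #|[set z | P z]| = (\sum_z (P z : nat))%N.
Proof. by rewrite -sum1_card big_mkcond; apply: eq_bigr => z _; rewrite inE; case: (P z). Qed.

Lemma count_rep m (X : {set 'rV[F]_m}) a v i :
  #|[set z in rep_code X | hdist (row_mx a v) z == i]| =
  (\sum_(b : 'rV[F]_1) #|[set c in X | hdist a b + hdist v c == i]|)%N.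
Proof.
rewrite (card_setE (fun z => (z \in rep_code X) && (hdist (row_mx a v) z == i))).
have hbij : bijective (fun p : 'rV[F]_1 * 'rV[F]_m => row_mx p.1 p.2).
  exists (fun z => (lsubmx z, rsubmx z)) => [[b c]|z] /=; first by rewrite row_mxKl row_mxKr.
  by rewrite hsubmxK.
rewrite (reindex _ (onW_bij _ hbij)) /=.
rewrite [RHS](eq_bigr (fun b => \sum_c (((c \in X) && (hdist a b + hdist v c == i)%N) : nat))%N); last first.
  by move=> b _; rewrite card_setE.
rewrite pair_big /=; apply: eq_bigr => [[b c]] _ /=.
by rewrite rep_mem hdist_row_mx.
Qed.

Definition Gc m (X : {set 'rV[F]_m}) v (t i : nat) :=
  #|[set c in X | (t + hdist v c == i)%N]|.

Lemma Gc_eq m (X : {set 'rV[F]_m}) v v' t i :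
  (forall j, #|[set c in X | hdist v c == j]| = #|[set c in X | hdist v' c == j]|) ->
  Gc X v t i = Gc X v' t i.
Proof.
move=> HN; rewrite /Gc; case: (leqP t i) => Hti.
  have E : forall w, [set c in X | (t + hdist w c == i)%N] = [set c in X | hdist w c == (i - t)%N].
    move=> w; apply/setP => c; rewrite !inE; congr (_ && _).
    by apply/eqP/eqP; lia.
  by rewrite !E HN.
have E : forall w, [set c in X | (t + hdist w c == i)%N] = set0.
  by move=> w; apply/setP => c; rewrite !inE; case: (_ \in _) => //=; apply/negbTE/eqP; lia.
by rewrite !E.
Qed.

Lemma Gc0 m (X : {set 'rV[F]_m}) v i : Gc X v 0 i = #|[set c in X | hdist v c == i]|.
Proof. by []. Qed.

Lemma Gc1_0 m (X : {set 'rV[F]_m}) v : Gc X v 1 0 = 0%N.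
Proof.
rewrite /Gc (_ : [set c in X | _] = set0) ?cards0 //.
by apply/setP => c; rewrite !inE andbF.
Qed.

Lemma Gc1_S m (X : {set 'rV[F]_m}) v j : Gc X v 1 j.+1 = #|[set c in X | hdist v c == j]|.
Proof. by []. Qed.

Lemma rep_CR_of m (X : {set 'rV[F]_m}) c0 : c0 \in X ->
  completely_regular X -> completely_regular (rep_code X).
Proof.
move=> Hc0 HX x y Hd i.
rewrite -(hsubmxK x) -(hsubmxK y) in Hd *.
move: (lsubmx x) (rsubmx x) (lsubmx y) (rsubmx y) Hd => a v a' v'.
rewrite !(dist_rep _ _ Hc0) => Hd.
rewrite !count_rep.
rewrite (eq_bigr (fun b => Gc X v' (hdist a b) i)); last first.
  by move=> b _; apply: (Gc_eq _ _ (HX _ _ Hd)).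
rewrite (reindex_inj (addIr (a - a'))) /=.
apply: eq_bigr => b _; rewrite /Gc -(hdist_transl a' b (a - a')).
by rewrite [a' + _]addrC subrK.
Qed.

Lemma rv1_neq0 (b : 'rV[F]_1) : b != 0 -> hdist 0%R b = 1%N.
Proof.
move=> Hb; rewrite hdist1 mxE eq_sym; case: eqP => // E.
by case/eqP: Hb; apply/rowP => j; rewrite ord1 E mxE.
Qed.

Lemma sum_rep0 m (X : {set 'rV[F]_m}) v i :
  (\sum_(b : 'rV[F]_1) Gc X v (hdist 0%R b) i)%N =
  (Gc X v 0 i + #|[pred b : 'rV[F]_1 | b != 0%R]| * Gc X v 1 i)%N.
Proof.
rewrite (bigD1 0%R) //= hdistxx; congr (_ + _)%N.
rewrite -sum_nat_const; apply: eq_big => b //.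
by move=> Hb; rewrite rv1_neq0.
Qed.

Lemma CR_of_rep m (X : {set 'rV[F]_m}) c0 : c0 \in X ->
  completely_regular (rep_code X) -> completely_regular X.
Proof.
move=> Hc0 HR x y Hd.
have Hd' : dist_to_code (row_mx 0%R x) (rep_code X) = dist_to_code (row_mx 0%R y) (rep_code X).
  by rewrite !(dist_rep _ _ Hc0).
have H := HR _ _ Hd'; move: H.
have E : forall v i, #|[set z in rep_code X | hdist (row_mx 0%R v) z == i]| =
   (Gc X v 0 i + #|[pred b : 'rV[F]_1 | b != 0%R]| * Gc X v 1 i)%N.
  by move=> v i; rewrite count_rep -sum_rep0.
move=> H; elim=> [|j IH].
  by have := H 0%N; rewrite !E !Gc1_0 !muln0 !addn0.
by have := H j.+1; rewrite !E !Gc1_S IH => /addIn.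
Qed.

Section Iso.
Variables (n : nat) (phi : 'rV[F]_n -> 'rV[F]_n).
Hypothesis phib : bijective phi.
Hypothesis phii : forall x y, hdist (phi x) (phi y) = hdist x y.

Let phiinj : injective phi. Proof. exact: bij_inj. Qed.

Lemma dist_iso (C : {set 'rV[F]_n}) c0 v : c0 \in C ->
  dist_to_code (phi v) (phi @: C) = dist_to_code v C.
Proof.
move=> Hc0; apply: (dist_uniq (c0 := phi c0)); first exact: imset_f.
  by move=> z /imsetP [c Hc ->]; rewrite phii dist_le.
have [c Hc E] := dist_att v Hc0.
by exists (phi c); rewrite ?imset_f // phii E.
Qed.

Lemma cov_iso (C : {set 'rV[F]_n}) c0 : c0 \in C ->
  cov_rad (phi @: C) = cov_rad C.
Proof.
move=> Hc0; case: phib => psi K1 K2.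
apply/eqP; rewrite eqn_leq; apply/andP; split.
  apply/bigmax_leqP => w _; rewrite -(K2 w) (dist_iso _ Hc0).
  exact: leq_bigmax.
apply/bigmax_leqP => v _; rewrite -(dist_iso v Hc0).
exact: leq_bigmax.
Qed.

Lemma count_iso (C : {set 'rV[F]_n}) x i :
  #|[set c in phi @: C | hdist (phi x) c == i]| = #|[set c in C | hdist x c == i]|.
Proof.
rewrite -[RHS](card_imset _ phiinj); apply: eq_card => z; rewrite !inE.
apply/andP/imsetP => [[/imsetP [c Hc ->]]|[c]].
  by rewrite phii => Hi; exists c; rewrite // inE Hc.
by rewrite inE => /andP [Hc Hi] ->; rewrite imset_f // phii.
Qed.

Lemma CR_iso (C : {set 'rV[F]_n}) c0 : c0 \in C ->
  completely_regular (phi @: C) <-> completely_regular C.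
Proof.
move=> Hc0; case: phib => psi K1 K2; split => H x y Hd i.
  by rewrite -(count_iso C x i) -(count_iso C y i); apply: H; rewrite !(dist_iso _ Hc0).
rewrite -(K2 x) -(K2 y) !count_iso; apply: H.
by rewrite -!(dist_iso _ Hc0) !K2.
Qed.

End Iso.

Definition relab n N (g : 'I_n -> 'I_N) (x : 'rV[F]_N) : 'rV[F]_n := \row_j x 0 (g j).

Lemma relab_bij n (g : 'I_n -> 'I_n) : injective g -> bijective (relab g).
Proof.
move=> gi; have [h K1 K2] : bijective g by apply: inj_card_bij.
exists (relab h) => x; apply/rowP => j; rewrite !mxE ?K1 ?K2 //.
Qed.

Lemma relab_iso n (g : 'I_n -> 'I_n) : injective g ->
  forall x y, hdist (relab g x) (relab g y) = hdist x y.
Proof.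
move=> gi x y; rewrite !hdist_sum [in RHS](reindex_inj gi).
by apply: eq_bigr => j _; rewrite !mxE.
Qed.

Lemma lin_comb n (C : {set 'rV[F]_n}) x y a : is_linear_code C ->
  x \in C -> y \in C -> a *: x + y \in C.
Proof.
case/andP => _ /forall_inP H Hx Hy.
by move: (H x Hx) => /forall_inP /(_ y Hy) /forallP.
Qed.

Lemma lin0 n (C : {set 'rV[F]_n}) : is_linear_code C -> 0 \in C.
Proof. by case/andP. Qed.

Lemma hdist_eq0 n (x y : 'rV[F]_n) : hdist x y = 0%N -> x = y.
Proof.
move/eqP; rewrite cards_eq0 => /eqP E; apply/rowP => j.
apply/eqP; apply: contraT => Hj.
by move: (in_set0 j); rewrite -E inE Hj.
Qed.

Definition punct n (i : 'I_n.+1) (x : 'rV[F]_n.+1) : 'rV[F]_n := \row_j x 0 (lift i j).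
Definition ins n (i : 'I_n.+1) (c : F) (w : 'rV[F]_n) : 'rV[F]_n.+1 :=
  \row_j (if unlift i j is Some j' then w 0 j' else c).

Lemma ins_punct n (i : 'I_n.+1) (u y : 'rV[F]_n.+1) c :
  u 0 i = 1 -> (forall j, u 0 (lift i j) = 0) ->
  ins i c (punct i y) = (c - y 0 i) *: u + y.
Proof.
move=> Hu1 Hu0; apply/rowP => j; rewrite !mxE.
case: unliftP => [j'|] ->; rewrite ?mxE.
  by rewrite Hu0 mulr0 add0r.
by rewrite Hu1 mulr1 subrK.
Qed.

Lemma decompC n (i : 'I_n.+1) (C : {set 'rV[F]_n.+1}) u :
  is_linear_code C -> u \in C -> u 0 i = 1 -> (forall j, u 0 (lift i j) = 0) ->
  C = [set ins i c w | c in [set: F], w in punct i @: C].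
Proof.
move=> HC Hu Hu1 Hu0; apply/setP => z; apply/idP/imset2P => [Hz|[c w _ Hw ->]].
  exists (z 0 i) (punct i z); rewrite ?inE ?imset_f //.
  by rewrite (ins_punct _ _ Hu1 Hu0) subrr scale0r add0r.
case/imsetP: Hw => y Hy ->; rewrite (ins_punct _ _ Hu1 Hu0).
exact: lin_comb.
Qed.

Lemma punct_lin n (i : 'I_n.+1) (C : {set 'rV[F]_n.+1}) :
  is_linear_code C -> is_linear_code (punct i @: C).
Proof.
move=> HC; apply/andP; split.
  apply/imsetP; exists 0; first exact: lin0.
  by apply/rowP => j; rewrite !mxE.
apply/forall_inP => _ /imsetP [x Hx ->]; apply/forall_inP => _ /imsetP [y Hy ->].
apply/forallP => a; apply/imsetP; exists (a *: x + y); first exact: lin_comb.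
by apply/rowP => j; rewrite !mxE.
Qed.

Definition gext n N (i : 'I_n.+1) (g : 'I_n -> 'I_N) (j : 'I_n.+1) : 'I_(1 + N) :=
  if unlift i j is Some j' then rshift 1 (g j') else lshift N (ord0 : 'I_1).

Lemma gext_inj n N (i : 'I_n.+1) (g : 'I_n -> 'I_N) : injective g -> injective (gext i g).
Proof.
move=> gi j1 j2; rewrite /gext.
case: unliftP => [j1'|] ->; case: unliftP => [j2'|] -> //.
all: try by move/rshift_inj/gi ->.
all: by move/(congr1 val) => /=; lia.
Qed.

Lemma relab_row_mx n N (i : 'I_n.+1) (g : 'I_n -> 'I_N) (a : 'rV[F]_1) y :
  relab (gext i g) (row_mx a y) = ins i (a 0 0) (relab g y).
Proof.
apply/rowP => j; rewrite [LHS]mxE [RHS]mxE /gext.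
by case: unliftP => [j'|] _; rewrite ?row_mxEr ?row_mxEl ?mxE.
Qed.

Lemma relab_rep n N (i : 'I_n.+1) (g : 'I_n -> 'I_N) (X : {set 'rV[F]_N}) :
  relab (gext i g) @: rep_code X = [set ins i c w | c in [set: F], w in relab g @: X].
Proof.
apply/setP => z; apply/imsetP/imset2P => [[x Hx ->]|[c w _ Hw ->]].
  rewrite -(hsubmxK x) relab_row_mx.
  by exists (lsubmx x 0 0) (relab g (rsubmx x)); rewrite ?inE ?imset_f // -mem_rep.
case/imsetP: Hw => y Hy ->.
exists (row_mx (const_mx c) y); first by rewrite rep_mem.
by rewrite relab_row_mx mxE.
Qed.

Lemma md_case n (C : {set 'rV[F]_n}) :
  [forall x in C, forall y in C, (x != y) ==> (1 < hdist x y)%N] -> min_dist_gt1 C.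
Proof.
move/forall_inP => H x y Hx Hy Hxy.
by move: (H x Hx) => /forall_inP /(_ y Hy) /implyP; apply.
Qed.

Lemma relab_id n (X : {set 'rV[F]_n}) : relab (fun j : 'I_n => j) @: X = X.
Proof.
rewrite -[RHS]imset_id; apply: eq_imset => x.
by apply/rowP => j; rewrite mxE.
Qed.

Lemma structure n (C : {set 'rV[F]_n}) : is_linear_code C ->
  exists k m (D : {set 'rV[F]_m}) (e : (k + m = n)%N) (g : 'I_n -> 'I_(k + m)),
    [/\ injective g, is_linear_code D, min_dist_gt1 D & C = relab g @: rep_iter k D].
Proof.
elim: n C => [|n IH] C HC;
  have [Hmd|Hnmd] := boolP [forall x in C, forall y in C, (x != y) ==> (1 < hdist x y)%N].
- exists 0%N, 0%N, C, erefl, (fun j => j); split => //; last by rewrite relab_id.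
  exact: md_case.
- case/forall_inPn: Hnmd => x Hx /forall_inPn [y Hy].
  rewrite negb_imply => /andP [Hxy _]; case/negP: Hxy.
  by apply/eqP/rowP => [[]].
- exists 0%N, n.+1, C, erefl, (fun j => j); split => //; last by rewrite relab_id.
  exact: md_case.
case/forall_inPn: Hnmd => x Hx /forall_inPn [y Hy].
rewrite negb_imply -leqNgt => /andP [Hxy Hle].
have H1 : hdist x y = 1%N.
  apply/eqP; rewrite eqn_leq Hle lt0n; apply: contra Hxy => /eqP H0.
  by apply/eqP/hdist_eq0.
move: H1; rewrite /hdist => /eqP /cards1P [i0 Hi0].
set w := (-1) *: y + x.
have Hw : w \in C by apply: lin_comb.
have Hwj : forall j, w 0 j = 0 <-> j != i0.
  move=> j; have := (proj2 (setP _ _) Hi0) j; rewrite !inE /= /w !mxE.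
  move=> E; rewrite mulN1r addrC -E negbK.
  by split => [H|/eqP ->]; [apply/eqP; apply: subr0_eq | rewrite subrr].
clearbody w.
have Hwi : w 0 i0 != 0 by apply/eqP => /Hwj; rewrite eqxx.
set u := (w 0 i0)^-1 *: w + 0.
have Hu : u \in C by apply: lin_comb => //; apply: lin0.
have Hu1 : u 0 i0 = 1 by rewrite /u !mxE addr0 mulVf.
have Hu0 : forall j, u 0 (lift i0 j) = 0.
  move=> j; have Hl : lift i0 j != i0 by rewrite eq_sym; apply: neq_lift.
  by rewrite /u !mxE addr0 (proj2 (Hwj _) Hl) mulr0.
have [k' [m [D [e' [g' [gi HD HmdD ED]]]]]] := IH _ (punct_lin i0 HC).
have e : (k'.+1 + m = n.+1)%N by rewrite addSn e'.
exists k'.+1, m, D, e, (gext i0 g'); split => //.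
  exact: gext_inj.
rewrite (decompC HC Hu Hu1 Hu0) ED.
exact: esym (relab_rep i0 g' (rep_iter k' D)).
Qed.

Lemma rep_iter_props m (D : {set 'rV[F]_m}) c0 k : c0 \in D ->
  [/\ exists c, c \in rep_iter k D, cov_rad (rep_iter k D) = cov_rad D &
      (completely_regular (rep_iter k D) <-> completely_regular D)].
Proof.
move=> Hc0; elim: k => [|k [[c Hc] Hcov HCR]] /=.
  by split => //; exists c0.
split.
- by exists (row_mx (0 : 'rV[F]_1) c); rewrite rep_mem.
- by rewrite (cov_rep Hc).
- split => H; first by apply/HCR; apply: (CR_of_rep Hc).
  by apply: (rep_CR_of Hc); apply/HCR.
Qed.

End Aux.

Theorem corollary2p4 (F : finFieldType) (n : nat) (C : {set 'rV[F]_n})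
    (rho : nat) :
  is_linear_code C -> C != [set: 'rV[F]_n] ->
  has_min_dist C 1 -> cov_rad C = rho ->
  exists (k m : nat) (D : {set 'rV[F]_m}) (e : (k + m = n)%N) (s : 'S_n),
    [/\ is_linear_code D, min_dist_gt1 D, cov_rad D = rho,
        C = [set col_perm s (castmx (erefl 1%N, e) x) | x in rep_iter k D]
      & (completely_regular C <-> completely_regular D)].
Proof.
move=> HC _ _ Hcov.
have [k [m [D [e [g [gi HD HmdD EC]]]]]] := structure HC.
subst n.
have [[c Hc] HcovR HCR] := rep_iter_props k (lin0 HD).
exists k, m, D, erefl, (perm gi); split => //.
- by rewrite -HcovR -Hcov EC (cov_iso (relab_bij F gi) (relab_iso gi) Hc).
- rewrite EC; apply: eq_imset => x; rewrite castmx_id.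
  by apply/rowP => j; rewrite !mxE permE.
- rewrite -HCR EC; exact: (CR_iso (relab_bij F gi) (relab_iso gi) Hc).
Qed.
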